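(* Let $x\in M$, let $\mathcal T$ be a family of $f$-induced $(D_0,\delta,\tau)$-local tilings on $W^u(x)$, and consider modified Schmidt games induced by $f$ on $W^u(x)$ with respect to $\mathcal T$. Then: (1) for any integers $a,b>a_*$, every $(a,b)$-winning set is dense in $D_0$; (2) for any integer $a>a_*$, the intersection of countably many $a$-winning sets is $a$-winning.
   Context: $M$ is a smooth compact Riemannian manifold without boundary and $f:M\to M$ a $C^{1+\theta}$ partially hyperbolic diffeomorphism (continuous $Tf$-invariant splitting $TM=E^s\oplus E^c\oplus E^u$ with $E^u$ uniformly expanded and dominating $E^c$, $E^s$ uniformly contracted and dominated by $E^c$). $W^u(x)$ is the unstable manifold through $x$ with induced distance $d^u$ and open balls $B^u(z,r)$. Constants $1<\sigma_1\le\sigma_2$ satisfy $\sigma_1\le\|T_zfv\|\le\sigma_2$ for all unit $v\in E^u_z$. Tilings: $\delta,\tau>0$ small, $D_0\subset W^u(x)$ open connected with $B^u(x_0,\frac{(1-\tau)\delta}{2})\subset D_0\subset B^u(x_0,(1+\tau)\delta)$ for some $x_0\in W^u(x)$. A family $D^i_n$ ($n\ge1$, $1\le i\le k_n$) of subsets of $W^u(x)$ is a family of $f$-induced $(D_0,\delta,\tau)$-local tilings if: (1) each $D^i_n$ is open connected with $B^u(f^n(x^i_n),\frac{(1-\tau)\delta}{2})\subset f^n(D^i_n)\subset B^u(f^n(x^i_n),(1+\tau)\delta)$ for some $x^i_n\in W^u(x)$; (2) $D^i_n\cap D^j_n=\emptyset$ for $i\ne j$; (3) $D_0\subset\bigcup_i\overline{D^i_n}$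 and $D^i_n\cap D_0\neq\emptyset$. With $\mathcal T_0=\{D_0\}$, elements of $\mathcal T_n$ are $n$-atoms, $\mathbf T_n$ their union, $\Omega=\{(z,n):z\in\mathbf T_n\}$, $\psi(z,n)$ the $n$-atom containing $z$, $(z,n)\le(z',n')$ iff $\psi(z,n)\subset\psi(z',n')$. Games: fix a positive integer $a_*$ with $(1+\tau)\delta\sigma_1^{-a_*}<(1-\tau)\delta/4$ (then each atom $\psi(z,n)$ contains an $(n+m)$-atom for all $m>a_*$). For $a,b>a_*$ and target $S\subset W^u(x)$: Bob chooses $\omega_1=(z_1,n_1)\in\Omega$; Alice chooses $\omega'_1\le\omega_1$ at level $n_1+a$; in turn $k$ Bob chooses $\omega_k\le\omega'_{k-1}$ at level $n'_{k-1}+b$, Alice chooses $\omega'_k\le\omega_k$ at level $n_k+a$. The nested atoms shrink to a unique point $z_\infty$; Alice wins iff $z_\infty\in S$. $S$ is $(a,b)$-winning if Alice has a strategy that always wins; $a$-winning if $(a,b)$-winning for every $b>a_*$. *)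

(* Defs.v *)
From Stdlib Require Import Reals List.
Open Scope R_scope.

(* Abstract unstable lamination of a partially hyperbolic diffeomorphism f:
   points of M, f and its inverse, the unstable-leaf relation
   (Wu y z  <->  z in W^u(y)), the leafwise induced distance d^u
   (only meaningful for points on a common leaf), and the uniform
   expansion constants 1 < sigma1 <= sigma2 integrated along leaves. *)
Record UnstableLamination := {
  pt : Type;
  fm : pt -> pt;
  fm_inv : pt -> pt;
  fm_invK : forall y, fm_inv (fm y) = y;
  fmK : forall y, fm (fm_inv y) = y;
  Wu : pt -> pt -> Prop;
  Wu_refl : forall y, Wu y y;
  Wu_sym : forall y z, Wu y z -> Wu z y;
  Wu_trans : forall y z w, Wu y z -> Wu z w -> Wu y w;
  Wu_f : forall y z, Wu y z <-> Wu (fm y) (fm z);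
  du : pt -> pt -> R;
  du_refl : forall y, du y y = 0;
  du_sym : forall y z, Wu y z -> du y z = du z y;
  du_triangle : forall y z w, Wu y z -> Wu z w -> du y w <= du y z + du z w;
  du_pos : forall y z, Wu y z -> y <> z -> 0 < du y z;
  sigma1 : R;
  sigma2 : R;
  sigma_bounds : 1 < sigma1 <= sigma2;
  du_f_bounds : forall y z, Wu y z ->
      sigma1 * du y z <= du (fm y) (fm z) <= sigma2 * du y z;
  Wu_complete : forall (y : pt) (u : nat -> pt),
      (forall n, Wu y (u n)) ->
      (forall eps, 0 < eps -> exists N, forall m n, (N <= m)%nat -> (N <= n)%nat ->
          du (u m) (u n) < eps) ->
      exists l, Wu y l /\
        (forall eps, 0 < eps -> exists N, forall n, (N <= n)%nat -> du l (u n) < eps)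
}.

Section Defs.
Variable U : UnstableLamination.

Definition fiter (n : nat) (y : pt U) : pt U := Nat.iter n (fm U) y.

Definition Bu (z : pt U) (r : R) (y : pt U) : Prop := Wu U z y /\ du U z y < r.

Definition leaf_open (A : pt U -> Prop) : Prop :=
  forall y, A y -> exists r, 0 < r /\ forall z, Bu y r z -> A z.

Definition leaf_connected (A : pt U -> Prop) : Prop :=
  forall P Q : pt U -> Prop, leaf_open P -> leaf_open Q ->
    (forall y, A y -> P y \/ Q y) ->
    (forall y, A y -> ~ (P y /\ Q y)) ->
    (exists y, A y /\ P y) -> (exists y, A y /\ Q y) -> False.

Definition leaf_closure (A : pt U -> Prop) (y : pt U) : Prop :=
  forall eps, 0 < eps -> exists z, A z /\ Wu U y z /\ du U y z < eps.

Definition initial_domain (x : pt U) (delta tau : R) (x0 : pt U)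
    (D0 : pt U -> Prop) : Prop :=
  Wu U x x0 /\ leaf_open D0 /\ leaf_connected D0 /\
  (forall y, Bu x0 ((1 - tau) * delta / 2) y -> D0 y) /\
  (forall y, D0 y -> Bu x0 ((1 + tau) * delta) y).

Definition tile (x : pt U) (delta tau : R) (n : nat) (c : pt U)
    (A : pt U -> Prop) : Prop :=
  Wu U x c /\ leaf_open A /\ leaf_connected A /\
  (forall y, A y -> Wu U x y) /\
  (forall y, Wu U x y -> du U (fiter n c) (fiter n y) < (1 - tau) * delta / 2 -> A y) /\
  (forall y, A y -> du U (fiter n c) (fiter n y) < (1 + tau) * delta).

(* Family of f-induced (D0,δ,τ)-local tilings: for n >= 1 the tiles are
   D n i for i < k n (indices shifted to start at 0), with centres xs n i. *)
Definition local_tilings (x : pt U) (delta tau : R) (D0 : pt U -> Prop)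
    (k : nat -> nat) (D : nat -> nat -> pt U -> Prop) (xs : nat -> nat -> pt U)
    : Prop :=
  forall n, (1 <= n)%nat ->
    (forall i, (i < k n)%nat -> tile x delta tau n (xs n i) (D n i)) /\
    (forall i j y, (i < k n)%nat -> (j < k n)%nat -> i <> j ->
        ~ (D n i y /\ D n j y)) /\
    (forall y, D0 y -> exists i, (i < k n)%nat /\ leaf_closure (D n i) y) /\
    (forall i, (i < k n)%nat -> exists y, D n i y /\ D0 y).

Section Game.
Variables (D0 : pt U -> Prop) (k : nat -> nat) (D : nat -> nat -> pt U -> Prop).

(* psi (z,n): the n-atom containing z (T_0 = {D0}, T_n = {D n i | i < k n}) *)
Definition psi (w : pt U * nat) (y : pt U) : Prop :=
  let (z, n) := w in
  (n = 0%nat /\ D0 z /\ D0 y) \/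
  ((1 <= n)%nat /\ exists i, (i < k n)%nat /\ D n i z /\ D n i y).

Definition Omega (w : pt U * nat) : Prop := psi w (fst w).

Definition le_atom (w w' : pt U * nat) : Prop := forall y, psi w y -> psi w' y.

(* history given to Alice before her k-th move: [β0;α0;...;β(k-1);α(k-1);βk] *)
Fixpoint hist_pre (alpha beta : nat -> pt U * nat) (j : nat) : list (pt U * nat) :=
  match j with
  | O => nil
  | S j' => hist_pre alpha beta j' ++ (beta j' :: alpha j' :: nil)
  end.

Definition hist (alpha beta : nat -> pt U * nat) (j : nat) : list (pt U * nat) :=
  hist_pre alpha beta j ++ (beta j :: nil).

Definition bob_legal (b : nat) (alpha beta : nat -> pt U * nat) (j : nat) : Prop :=
  Omega (beta j) /\
  match j with
  | O => True
  | S j' => le_atom (beta j) (alpha j') /\ snd (beta j) = (snd (alpha j') + b)%nat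
  end.

Definition alice_legal (a : nat) (alpha beta : nat -> pt U * nat) (j : nat) : Prop :=
  Omega (alpha j) /\ le_atom (alpha j) (beta j) /\ snd (alpha j) = (snd (beta j) + a)%nat.

(* Alice wins iff the limit point z_∞ of the nested atoms lies in S *)
Definition alice_wins (S : pt U -> Prop) (beta : nat -> pt U * nat) : Prop :=
  exists z, S z /\ forall j, leaf_closure (psi (beta j)) z.

Definition ab_winning (a b : nat) (S : pt U -> Prop) : Prop :=
  exists strat : list (pt U * nat) -> pt U * nat,
    forall alpha beta : nat -> pt U * nat,
      (forall j, alpha j = strat (hist alpha beta j)) ->
      (forall j, (forall i, (i <= j)%nat -> bob_legal b alpha beta i) ->
                 alice_legal a alpha beta j) /\
      ((forall j, bob_legal b alpha beta j) -> alice_wins S beta).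

Definition a_winning (astar a : nat) (S : pt U -> Prop) : Prop :=
  forall b, (astar < b)%nat -> ab_winning a b S.

End Game.

Definition dense_in (S D0 : pt U -> Prop) : Prop :=
  forall z, D0 z -> forall eps, 0 < eps ->
    exists y, S y /\ D0 y /\ Wu U z y /\ du U z y < eps.

End Defs.

(* Main.v *)
Require Import Defs.
From Stdlib Require Import Reals Lra Lia List Classical ClassicalEpsilon Arith Wf_nat.
Open Scope R_scope.

Section Basic.
Variable U : UnstableLamination.

Lemma du_nonneg y z : Wu U y z -> 0 <= du U y z.
Proof.
  intro H. destruct (classic (y = z)) as [->|Hn].
  - rewrite du_refl; lra.
  - left; apply du_pos; auto.
Qed.

Lemma fiter_S n y : fiter U (S n) y = fm U (fiter U n y).
Proof. reflexivity. Qed.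

Lemma fiter_Wu n y z : Wu U y z -> Wu U (fiter U n y) (fiter U n z).
Proof.
  intro H; induction n; [exact H|].
  rewrite !fiter_S. apply (proj1 (Wu_f U _ _)); auto.
Qed.

Lemma fiter_bounds n y z : Wu U y z ->
  sigma1 U ^ n * du U y z <= du U (fiter U n y) (fiter U n z) <= sigma2 U ^ n * du U y z.
Proof.
  intro H. pose proof (sigma_bounds U) as Hs.
  induction n.
  - simpl. unfold fiter; simpl. lra.
  - rewrite !fiter_S. pose proof (du_f_bounds U _ _ (fiter_Wu n _ _ H)) as [H1 H2].
    destruct IHn as [I1 I2]. simpl. split.
    + rewrite Rmult_assoc. apply Rle_trans with (sigma1 U * du U (fiter U n y) (fiter U n z)); auto.
      apply Rmult_le_compat_l; lra.
    + rewrite Rmult_assoc. apply Rle_trans with (sigma2 U * du U (fiter U n y) (fiter U n z)); auto.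
      apply Rmult_le_compat_l; lra.
Qed.

Lemma fiter_add m n y : fiter U (m + n) y = fiter U m (fiter U n y).
Proof. unfold fiter. apply Nat.iter_add. Qed.

Lemma du_tri3 a b c d : Wu U a b -> Wu U b c -> Wu U c d ->
  du U a d <= du U a b + du U b c + du U c d.
Proof.
  intros. pose proof (du_triangle U a b c H H0).
  pose proof (du_triangle U a c d (Wu_trans U _ _ _ H H0) H1). lra.
Qed.

Lemma inv_pow_small : forall eps, 0 < eps -> exists N, forall n, (N <= n)%nat ->
  (/ sigma1 U) ^ n < eps.
Proof.
  intros eps He. pose proof (sigma_bounds U) as Hs.
  destruct (pow_lt_1_zero (/ sigma1 U)) with eps as [N HN]; auto.
  - rewrite Rabs_pos_eq. rewrite <- Rinv_1; apply Rinv_lt_contravar; lra. left; apply Rinv_0_lt_compat; lra.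
  - exists N. intros n Hn. specialize (HN n Hn).
    rewrite Rabs_pos_eq in HN; auto. apply pow_le. left; apply Rinv_0_lt_compat; lra.
Qed.

Lemma from_expand n K d : sigma1 U ^ n * d < K -> d < K * (/ sigma1 U) ^ n.
Proof.
  intro H. pose proof (sigma_bounds U) as Hs.
  assert (0 < sigma1 U ^ n) by (apply pow_lt; lra).
  rewrite pow_inv.
  apply Rmult_lt_reg_l with (sigma1 U ^ n); auto.
  replace (sigma1 U ^ n * (K * / sigma1 U ^ n)) with K by (field; lra). lra.
Qed.

End Basic.
Open Scope R_scope.

Section Tiles.
Variable U : UnstableLamination.
Variables (x : pt U) (delta tau : R) (D0 : pt U -> Prop) (k : nat -> nat)
  (D : nat -> nat -> pt U -> Prop) (xs : nat -> nat -> pt U).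
Hypothesis HT : local_tilings U x delta tau D0 k D xs.
Hypothesis Hd : 0 < delta.
Hypothesis Ht : 0 < tau < 1.

Definition Kd := 2 * (1 + tau) * delta.

Lemma inv_pow_anti m n : (m <= n)%nat -> (/ sigma1 U) ^ n <= (/ sigma1 U) ^ m.
Proof.
  intro H. pose proof (sigma_bounds U). rewrite !pow_inv.
  apply Rinv_le_contravar. apply pow_lt; lra. apply Rle_pow; auto; lra.
Qed.

Lemma tile_of n i : (1 <= n)%nat -> (i < k n)%nat -> tile U x delta tau n (xs n i) (D n i).
Proof. intros H1 H2. apply (proj1 (HT n H1)); auto. Qed.

Lemma tile_Wu n i y : (1 <= n)%nat -> (i < k n)%nat -> D n i y -> Wu U x y.
Proof. intros H1 H2 H3. destruct (tile_of n i H1 H2) as (_&_&_&h&_). auto. Qed.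

Lemma center_in n i : (1 <= n)%nat -> (i < k n)%nat -> D n i (xs n i).
Proof.
  intros H1 H2. destruct (tile_of n i H1 H2) as (h1&_&_&_&h5&_).
  apply h5; [exact h1|]. rewrite du_refl. nra.
Qed.

Lemma tile_diam_gen n i p y y' : (1 <= n)%nat -> (i < k n)%nat -> (p <= n)%nat ->
  D n i y -> D n i y' ->
  Wu U (fiter U p y) (fiter U p y') /\
  du U (fiter U p y) (fiter U p y') < Kd * (/ sigma1 U) ^ (n - p).
Proof.
  intros H1 H2 Hp Hy Hy'.
  destruct (tile_of n i H1 H2) as (h1&_&_&h4&h5&h6).
  assert (Wy : Wu U y y') by (apply Wu_trans with x; [apply Wu_sym|]; auto).
  split. apply fiter_Wu; auto.
  apply from_expand.
  assert (E : forall z, fiter U n z = fiter U (n - p) (fiter U p z)).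
  { intro z. rewrite <- fiter_add. f_equal. lia. }
  pose proof (fiter_bounds U (n - p) _ _ (fiter_Wu U p _ _ Wy)) as [B _].
  rewrite <- !E in B.
  assert (Wc : Wu U (fiter U n (xs n i)) (fiter U n y)) by (apply fiter_Wu; apply Wu_trans with x; [apply Wu_sym|]; auto).
  assert (Wc' : Wu U (fiter U n (xs n i)) (fiter U n y')) by (apply fiter_Wu; apply Wu_trans with x; [apply Wu_sym|]; auto).
  pose proof (du_triangle U (fiter U n y) (fiter U n (xs n i)) (fiter U n y') (Wu_sym U _ _ Wc) Wc').
  rewrite <- (du_sym U _ _ Wc) in H.
  pose proof (h6 y Hy). pose proof (h6 y' Hy').
  unfold Kd. lra.
Qed.

Lemma tile_diam n i y y' : (1 <= n)%nat -> (i < k n)%nat -> D n i y -> D n i y' ->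
  Wu U y y' /\ du U y y' < Kd * (/ sigma1 U) ^ n.
Proof.
  intros. destruct (tile_diam_gen n i 0 y y') as [A B]; auto; try lia.
  rewrite Nat.sub_0_r in B. split; auto.
Qed.

Lemma psi_diam w y y' : (1 <= snd w)%nat -> psi U D0 k D w y -> psi U D0 k D w y' ->
  Wu U y y' /\ du U y y' < 2 * Kd * (/ sigma1 U) ^ (snd w).
Proof.
  destruct w as [z n]; simpl. intros H1 [[? _]|[_ [i [Hi [Hz Hy]]]]] [[? _]|[_ [i' [Hi' [Hz' Hy']]]]];
    try lia.
  destruct (tile_diam n i z y) as [W1 E1]; auto.
  destruct (tile_diam n i' z y') as [W2 E2]; auto.
  split. apply Wu_trans with z; auto. apply Wu_sym; auto.
  pose proof (du_triangle U y z y' (Wu_sym U _ _ W1) W2).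
  rewrite (du_sym U y z) in H by (apply Wu_sym; auto). lra.
Qed.


Lemma sub_atom astar b w :
  (1 + tau) * delta * / (sigma1 U ^ astar) < (1 - tau) * delta / 4 ->
  (astar < b)%nat ->
  Omega U D0 k D w -> (1 <= snd w)%nat -> (forall y, psi U D0 k D w y -> D0 y) ->
  exists v, Omega U D0 k D v /\ le_atom U D0 k D v w /\ snd v = (snd w + b)%nat.
Proof.
  intros Hst Hb Hom H1 HD. destruct w as [z m]. simpl in H1 |- *.
  unfold Omega in Hom; simpl in Hom.
  destruct Hom as [[? _]|[_ [i [Hi [Hz _]]]]]; [lia|].
  set (c := xs m i).
  assert (Dc : D m i c) by (apply center_in; auto).
  assert (D0c : D0 c) by (apply HD; simpl; right; split; auto; exists i; auto).
  assert (Hmb : (1 <= m + b)%nat) by lia.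
  destruct (HT (m + b)%nat Hmb) as (_&Hdisj&Hcov&_).
  destruct (Hcov c D0c) as [j [Hj Hcl]].
  pose proof (sigma_bounds U) as Hs.
  rewrite <- pow_inv in Hst.
  set (eta := (1 - tau) * delta / 2 - Kd * (/ sigma1 U) ^ astar).
  assert (Heta : 0 < eta) by (unfold eta, Kd; lra).
  assert (Hs2 : 0 < sigma2 U ^ m) by (apply pow_lt; lra).
  destruct (Hcl (eta / sigma2 U ^ m)) as [w' [Dw' [Wcw' Ecw']]].
  { apply Rdiv_lt_0_compat; auto. }
  exists (w', (m + b)%nat). simpl. split; [|split; auto].
  - unfold Omega; simpl. right. split; auto. exists j; auto.
  - intros y [[? _]|[_ [i' [Hi' [Hw'i' Hy]]]]]; [lia|].
    assert (i' = j).
    { destruct (Nat.eq_dec i' j); auto. exfalso. apply (Hdisj i' j w'); auto. }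
    subst i'. right. split; auto. exists i. split; auto. split; auto.
    destruct (tile_of m i) as (_&_&_&_&h5&_); auto.
    apply h5. apply (tile_Wu (m + b) j); auto; lia.
    destruct (tile_diam_gen (m + b) j m w' y) as [W2 E2]; auto; try lia.
    replace (m + b - m)%nat with b in E2 by lia.
    assert (Hab : (astar <= b)%nat) by lia. pose proof (inv_pow_anti astar b Hab).
    assert (Kd * (/ sigma1 U) ^ b <= Kd * (/ sigma1 U) ^ astar).
    { apply Rmult_le_compat_l; auto. unfold Kd; nra. }
    pose proof (fiter_bounds U m c w' Wcw') as [_ B2].
    assert (sigma2 U ^ m * du U c w' < eta).
    { apply Rmult_lt_compat_l with (r := sigma2 U ^ m) in Ecw'; auto.
      replace (sigma2 U ^ m * (eta / sigma2 U ^ m)) with eta in Ecw' by (field; lra). auto. }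
    pose proof (du_triangle U _ _ _ (fiter_Wu U m _ _ Wcw') W2).
    change (xs m i) with c. unfold eta in H2. lra.
Qed.

End Tiles.
Open Scope R_scope.

Section Play.
Variable U : UnstableLamination.
Variables (strat : list (pt U * nat) -> pt U * nat) (bob : pt U * nat -> pt U * nat)
  (b0 : pt U * nat).

Fixpoint st (j : nat) : list (pt U * nat) * (pt U * nat) :=
  match j with
  | O => (nil, b0)
  | S j' => match st j' with
            | (p, bj) => let aj := strat (p ++ bj :: nil) in
                         (p ++ bj :: aj :: nil, bob aj)
            end
  end.

Definition pbeta j := snd (st j).
Definition palpha j := strat (fst (st j) ++ pbeta j :: nil).

Lemma st_hist j : fst (st j) = hist_pre U palpha pbeta j.
Proof.
  induction j; simpl; auto.
  rewrite <- IHj. unfold palpha, pbeta. destruct (st j) as [p bj]. simpl. reflexivity.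
Qed.

Lemma play_consistent j : palpha j = strat (hist U palpha pbeta j).
Proof. unfold hist. rewrite <- st_hist. reflexivity. Qed.

Lemma play_beta0 : pbeta 0 = b0.
Proof. reflexivity. Qed.

Lemma play_betaS j : pbeta (S j) = bob (palpha j).
Proof. unfold palpha, pbeta; simpl. destruct (st j) as [p bj]. reflexivity. Qed.

End Play.
Open Scope R_scope.

Section Part1.
Variable U : UnstableLamination.
Variables (x : pt U) (delta tau : R) (D0 : pt U -> Prop) (k : nat -> nat)
  (D : nat -> nat -> pt U -> Prop) (xs : nat -> nat -> pt U).
Hypothesis HT : local_tilings U x delta tau D0 k D xs.
Hypothesis Hd : 0 < delta.
Hypothesis Ht : 0 < tau < 1.
Hypothesis HDo : leaf_open U D0.

Lemma le_atom_refl w : le_atom U D0 k D w w.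
Proof. intros y h; auto. Qed.

Lemma le_atom_trans u v w : le_atom U D0 k D u v -> le_atom U D0 k D v w -> le_atom U D0 k D u w.
Proof. intros h1 h2 y h; auto. Qed.

Lemma Kd_pos : 0 < Kd delta tau.
Proof. unfold Kd. nra. Qed.

Lemma part1 astar a b St :
  (1 + tau) * delta * / (sigma1 U ^ astar) < (1 - tau) * delta / 4 ->
  (astar < b)%nat ->
  ab_winning U D0 k D a b St -> dense_in U St D0.
Proof.
  intros Hst Hb [strat Hstrat] z Hz eps He.
  destruct (HDo z Hz) as [r [Hr Hball]].
  set (rho := Rmin r eps / 4).
  assert (Hrho : 0 < rho) by (unfold rho; apply Rmin_case; lra).
  assert (Hrm : 4 * rho <= r /\ 4 * rho <= eps) by (pose proof (Rmin_l r eps); pose proof (Rmin_r r eps); unfold rho; split; lra).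
  pose proof Kd_pos as HK.
  destruct (inv_pow_small U (rho / (2 * Kd delta tau))) as [N HN].
  { apply Rdiv_lt_0_compat; lra. }
  set (n := S N).
  assert (Hn1 : (1 <= n)%nat) by (unfold n; lia).
  assert (Hdn : 2 * Kd delta tau * (/ sigma1 U) ^ n < rho).
  { specialize (HN n ltac:(unfold n; lia)).
    apply Rmult_lt_compat_l with (r := 2 * Kd delta tau) in HN; [|lra].
    replace (2 * Kd delta tau * (rho / (2 * Kd delta tau))) with rho in HN by (field; lra). lra. }
  destruct (HT n Hn1) as (_&_&Hcov&_).
  destruct (Hcov z Hz) as [i0 [Hi Hcl]].
  destruct (Hcl rho Hrho) as [w [Dw [Wzw Ezw]]].
  set (b0 := (w, n)).
  assert (Hpw : psi U D0 k D b0 w) by (right; split; auto; exists i0; auto).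
  assert (HB0 : forall y, psi U D0 k D b0 y -> Wu U z y /\ du U z y < 2 * rho).
  { intros y hy. destruct (psi_diam U x delta tau D0 k D xs HT b0 w y) as [W E]; auto.
    split. apply Wu_trans with w; auto.
    pose proof (du_triangle U _ _ _ Wzw W). change (snd b0) with n in E. lra. }
  assert (HB0D : forall y, psi U D0 k D b0 y -> D0 y).
  { intros y hy. apply Hball. destruct (HB0 y hy). split; auto. lra. }
  set (P := fun v => Omega U D0 k D v /\ (1 <= snd v)%nat /\ (forall y, psi U D0 k D v y -> D0 y)).
  assert (Hex : forall v, exists u, P v -> Omega U D0 k D u /\ le_atom U D0 k D u v /\ snd u = (snd v + b)%nat).
  { intro v. destruct (classic (P v)) as [Pv|nPv].
    - destruct Pv as (h1&h2&h3).
      destruct (sub_atom U x delta tau D0 k D xs HT Hd Ht astar b v) as [u hu]; auto.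
      exists u; auto.
    - exists v; tauto. }
  set (bob := fun v => proj1_sig (constructive_indefinite_description _ (Hex v))).
  assert (Hbob : forall v, P v -> Omega U D0 k D (bob v) /\ le_atom U D0 k D (bob v) v /\ snd (bob v) = (snd v + b)%nat).
  { intro v. unfold bob. destruct (constructive_indefinite_description _ (Hex v)); simpl; auto. }
  set (alpha := palpha U strat bob b0). set (beta := pbeta U strat bob b0).
  destruct (Hstrat alpha beta (play_consistent U strat bob b0)) as [Hleg Hwin].
  assert (Inv : forall j, forall i, (i <= j)%nat ->
     bob_legal U D0 k D b alpha beta i /\ le_atom U D0 k D (beta i) b0 /\ (1 <= snd (beta i))%nat).
  { induction j.
    - intros i hi. assert (i = 0%nat) by lia. subst i.
      unfold beta; rewrite play_beta0. split; [|split; [apply le_atom_refl|simpl; auto]].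
      split; simpl; auto.
    - intros i hi. destruct (Nat.eq_dec i (S j)) as [->|hne]; [|apply IHj; lia].
      destruct (Hleg j) as (A1&A2&A3). { intros i' hi'. apply IHj; auto. }
      destruct (IHj j (le_n j)) as (_&L0&L1).
      assert (Pa : P (alpha j)).
      { split; auto. split. lia. intros y hy. apply HB0D. apply L0, A2, hy. }
      destruct (Hbob _ Pa) as (B1&B2&B3).
      assert (E : beta (S j) = bob (alpha j)) by (unfold beta; apply play_betaS).
      assert (BL : bob_legal U D0 k D b alpha beta (S j)).
      { unfold bob_legal. rewrite E. split; [exact B1|split; [exact B2|exact B3]]. }
      split; [exact BL|split].
      + rewrite E. apply le_atom_trans with (alpha j); auto. apply le_atom_trans with (beta j); auto.
      + rewrite E. lia. }
  destruct Hwin as [zi [HSz Hcz]].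
  { intro j. apply (Inv j j); auto. }
  destruct (Hcz 0%nat rho Hrho) as [y [hy [Wy Ey]]].
  unfold beta in hy; rewrite play_beta0 in hy.
  destruct (HB0 y hy) as [Wzy Ezy].
  assert (Wzz : Wu U z zi) by (apply Wu_trans with y; auto; apply Wu_sym; auto).
  pose proof (du_triangle U z y zi Wzy (Wu_sym U _ _ Wy)).
  rewrite <- (du_sym U _ _ Wy) in H.
  exists zi. split; auto. split; [apply Hball; split; auto; lra|]. split; auto. lra.
Qed.

End Part1.
Open Scope R_scope.
Close Scope R_scope.

Definition g (m l : nat) : nat := 2 ^ m * (2 * l + 1) - 1.

Fixpoint dec (fuel t : nat) : nat * nat :=
  match fuel with
  | O => (0, 0)
  | S f => if Nat.even t then (0, Nat.div2 t)
           else match dec f (Nat.div2 t) with (m, l) => (S m, l) end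
  end.

Lemma pow2_pos m : 1 <= 2 ^ m.
Proof. induction m; simpl; lia. Qed.

Lemma g_S m l : g (S m) l = 2 * g m l + 1.
Proof.
  unfold g. pose proof (pow2_pos m). simpl (2 ^ S m).
  set (P := 2 ^ m) in *. nia.
Qed.

Lemma g_0 l : g 0 l = 2 * l.
Proof. unfold g. simpl. lia. Qed.

Lemma g_lS m l : g m (S l) = g m l + S (2 ^ S m - 1).
Proof.
  unfold g. pose proof (pow2_pos m). simpl (2 ^ S m).
  set (P := 2 ^ m) in *. nia.
Qed.

Lemma g_ge m l : l <= g m l.
Proof. unfold g. pose proof (pow2_pos m). set (P := 2 ^ m) in *. nia. Qed.

Lemma g_mono m l l' : l <= l' -> g m l <= g m l'.
Proof. unfold g. pose proof (pow2_pos m). set (P := 2 ^ m) in *. nia. Qed.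

Lemma g_smono m l l' : l < l' -> g m l < g m l'.
Proof. unfold g. pose proof (pow2_pos m). set (P := 2 ^ m) in *. nia. Qed.

Lemma dec_g m : forall l fuel, g m l < fuel -> dec fuel (g m l) = (m, l).
Proof.
  induction m; intros l fuel H; destruct fuel as [|f]; try lia; simpl.
  - rewrite g_0. rewrite Nat.even_even, Nat.div2_even. reflexivity.
  - rewrite g_S. rewrite Nat.even_odd, Nat.div2_odd'.
    rewrite IHm; auto. rewrite g_S in H. lia.
Qed.

Lemma dec_spec : forall fuel t, t < fuel -> g (fst (dec fuel t)) (snd (dec fuel t)) = t.
Proof.
  induction fuel; intros t H; [lia|]. simpl.
  destruct (Nat.Even_or_Odd t) as [[q ->]|[q ->]].
  - rewrite Nat.even_even, Nat.div2_even. simpl. rewrite g_0. reflexivity.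
  - rewrite Nat.even_odd, Nat.div2_odd'.
    specialize (IHfuel q ltac:(lia)).
    destruct (dec fuel q) as [m l]. simpl in *. rewrite g_S, IHfuel. reflexivity.
Qed.

Section Hist.
Variable U : UnstableLamination.
Notation P := (pt U * nat)%type.

Lemma hist_pre_len (al be : nat -> P) j : length (hist_pre U al be j) = 2 * j.
Proof.
  induction j; simpl; auto. rewrite length_app, IHj. simpl. lia.
Qed.

Lemma hist_len (al be : nat -> P) j : length (hist U al be j) = 2 * j + 1.
Proof. unfold hist. rewrite length_app, hist_pre_len. simpl. lia. Qed.

Lemma hist_pre_nth (al be : nat -> P) d j : forall i r, i < j ->
  nth (2 * i) (hist_pre U al be j ++ r) d = be i /\
  nth (2 * i + 1) (hist_pre U al be j ++ r) d = al i.
Proof.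
  induction j; intros i r H; [lia|].
  change (hist_pre U al be (S j)) with (hist_pre U al be j ++ (be j :: al j :: nil)).
  rewrite <- app_assoc.
  destruct (Nat.eq_dec i j) as [->|hne].
  - split; rewrite app_nth2; rewrite hist_pre_len; try lia.
    + replace (2 * j - 2 * j) with 0 by lia. reflexivity.
    + replace (2 * j + 1 - 2 * j) with 1 by lia. reflexivity.
  - apply IHj. lia.
Qed.

Lemma hist_nth_beta (al be : nat -> P) d t i : i <= t -> nth (2 * i) (hist U al be t) d = be i.
Proof.
  intro H. unfold hist. destruct (Nat.eq_dec i t) as [->|hne].
  - rewrite app_nth2; rewrite hist_pre_len; try lia. rewrite Nat.sub_diag. reflexivity.
  - apply hist_pre_nth. lia.
Qed.

Lemma hist_nth_alpha (al be : nat -> P) d t i : i < t -> nth (2 * i + 1) (hist U al be t) d = al i.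
Proof. intro H. unfold hist. apply hist_pre_nth. auto. Qed.

Lemma hist_pre_ext (al be al' be' : nat -> P) j :
  (forall i, i < j -> al i = al' i) -> (forall i, i < j -> be i = be' i) ->
  hist_pre U al be j = hist_pre U al' be' j.
Proof.
  induction j; intros H1 H2; simpl; auto.
  rewrite IHj; auto. rewrite H1, H2; auto.
Qed.

Lemma hist_ext (al be al' be' : nat -> P) j :
  (forall i, i < j -> al i = al' i) -> (forall i, i <= j -> be i = be' i) ->
  hist U al be j = hist U al' be' j.
Proof.
  intros. unfold hist. rewrite (hist_pre_ext al be al' be'); auto. rewrite H0; auto. intros; apply H0; lia.
Qed.

End Hist.
Open Scope R_scope.

Section Part2.
Variable U : UnstableLamination.
Variables (x : pt U) (delta tau : R) (D0 : pt U -> Prop) (k : nat -> nat)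
  (D : nat -> nat -> pt U -> Prop) (xs : nat -> nat -> pt U).
Hypothesis HT : local_tilings U x delta tau D0 k D xs.
Hypothesis Hd : 0 < delta.
Hypothesis Ht : 0 < tau < 1.

Notation la := (le_atom U D0 k D).

Lemma chain (a b : nat) (al be : nat -> pt U * nat) s0 e :
  (forall s, (s0 <= s)%nat -> (s < s0 + S e)%nat -> alice_legal U D0 k D a al be s) ->
  (forall s, (s0 < s)%nat -> (s <= s0 + S e)%nat -> bob_legal U D0 k D b al be s) ->
  la (be (s0 + S e)%nat) (al s0) /\ snd (be (s0 + S e)%nat) = (snd (al s0) + b + e * (a + b))%nat.
Proof.
  intros HA HB. induction e.
  - specialize (HB (S s0) ltac:(lia) ltac:(lia)).
    replace (s0 + 1)%nat with (S s0) by lia.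
    destruct HB as (_&h1&h2). split; auto. lia.
  - destruct IHe as [I1 I2].
    { intros; apply HA; lia. } { intros; apply HB; lia. }
    replace (s0 + S (S e))%nat with (S (s0 + S e)) by lia.
    destruct (HB (S (s0 + S e)) ltac:(lia) ltac:(lia)) as (_&h1&h2).
    destruct (HA (s0 + S e)%nat ltac:(lia) ltac:(lia)) as (_&h3&h4).
    split. apply le_atom_trans with (al (s0 + S e)%nat); auto.
    apply le_atom_trans with (be (s0 + S e)%nat); auto.
    lia.
Qed.

Lemma beta_mono (a b : nat) (al be : nat -> pt U * nat) :
  (forall s, alice_legal U D0 k D a al be s) -> (forall s, bob_legal U D0 k D b al be s) ->
  forall t t', (t <= t')%nat -> la (be t') (be t).
Proof.
  intros HA HB t t' H. destruct (Nat.eq_dec t t') as [<-|hne]; [apply le_atom_refl|].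
  replace t' with (t + S (t' - t - 1))%nat by lia.
  destruct (chain a b al be t (t' - t - 1)) as [h _]; auto.
  apply le_atom_trans with (al t); auto. apply HA.
Qed.

Lemma beta_level (a b : nat) (al be : nat -> pt U * nat) :
  (forall s, alice_legal U D0 k D a al be s) -> (forall s, bob_legal U D0 k D b al be s) ->
  (1 <= b)%nat -> forall t, (t <= snd (be t))%nat.
Proof.
  intros HA HB Hb t. induction t; [lia|].
  destruct (HB (S t)) as (_&_&h). destruct (HA t) as (_&_&h'). lia.
Qed.

Lemma limit_unique (be : nat -> pt U * nat) z z' :
  (forall t, (t <= snd (be t))%nat) ->
  (forall t, leaf_closure U (psi U D0 k D (be t)) z) ->
  (forall t, leaf_closure U (psi U D0 k D (be t)) z') -> z = z'.
Proof.
  intros Hl Hz Hz'.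
  assert (Hpos : 0 < 1) by lra.
  destruct (Hz 1%nat 1 Hpos) as [y [hy [Wy _]]].
  destruct (Hz' 1%nat 1 Hpos) as [y' [hy' [Wy' _]]].
  destruct (psi_diam U x delta tau D0 k D xs HT (be 1%nat) y y') as [Wyy _]; auto.
  assert (Wzz : Wu U z z').
  { apply Wu_trans with y; auto. apply Wu_trans with y'; auto. apply Wu_sym; auto. }
  apply NNPP. intro hne. pose proof (du_pos U z z' Wzz hne) as Hd0.
  set (d := du U z z') in *.
  pose proof (Kd_pos delta tau Hd Ht) as HK.
  destruct (inv_pow_small U (d / (6 * Kd delta tau))) as [N HN].
  { apply Rdiv_lt_0_compat; lra. }
  set (t := S N).
  assert (Ht1 : (1 <= snd (be t))%nat) by (specialize (Hl t); unfold t in *; lia).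
  assert (Hsm : 2 * Kd delta tau * (/ sigma1 U) ^ (snd (be t)) < d / 3).
  { assert (HNt : (N <= snd (be t))%nat) by (specialize (Hl t); unfold t in *; lia).
    specialize (HN N (le_n N)).
    pose proof (inv_pow_anti U N (snd (be t)) HNt).
    apply Rle_lt_trans with (2 * Kd delta tau * (/ sigma1 U) ^ N).
    apply Rmult_le_compat_l; lra.
    apply Rmult_lt_compat_l with (r := 2 * Kd delta tau) in HN; [|lra].
    replace (2 * Kd delta tau * (d / (6 * Kd delta tau))) with (d / 3) in HN by (field; lra). lra. }
  assert (Hd3 : 0 < d / 3) by lra.
  destruct (Hz t (d / 3) Hd3) as [u [hu [Wu1 Eu]]].
  destruct (Hz' t (d / 3) Hd3) as [u' [hu' [Wu2 Eu']]].
  destruct (psi_diam U x delta tau D0 k D xs HT (be t) u u') as [Wuu Euu]; auto.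
  pose proof (du_tri3 U z u u' z' Wu1 Wuu (Wu_sym U _ _ Wu2)).
  rewrite (du_sym U u' z') in H by (apply Wu_sym; auto).
  unfold d in *. lra.
Qed.

End Part2.
Open Scope R_scope.

Section Part2b.
Variable U : UnstableLamination.
Variables (x : pt U) (delta tau : R) (D0 : pt U -> Prop) (k : nat -> nat)
  (D : nat -> nat -> pt U -> Prop) (xs : nat -> nat -> pt U).
Hypothesis HT : local_tilings U x delta tau D0 k D xs.
Hypothesis Hd : 0 < delta.
Hypothesis Ht : 0 < tau < 1.

Notation la := (le_atom U D0 k D).

Definition bm (a b m : nat) : nat := (b + (2 ^ S m - 1) * (a + b))%nat.

Lemma sub_bob_legal (a b m L0 : nat) (al be : nat -> pt U * nat) :
  (forall s, (s <= g m L0)%nat -> bob_legal U D0 k D b al be s) ->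
  (forall s, (s < g m L0)%nat -> alice_legal U D0 k D a al be s) ->
  forall i, (i <= L0)%nat ->
    bob_legal U D0 k D (bm a b m) (fun l => al (g m l)) (fun l => be (g m l)) i.
Proof.
  intros HB HA i Hi. destruct i as [|i'].
  - split; [|exact I]. apply (HB (g m 0)). apply g_mono; lia.
  - assert (Hle : (g m (S i') <= g m L0)%nat) by (apply g_mono; lia).
    split. apply (HB (g m (S i')) Hle).
    rewrite g_lS.
    destruct (chain U D0 k D a b al be (g m i') (2 ^ S m - 1)) as [h1 h2].
    { intros s h h'. apply HA. rewrite g_lS in Hle. lia. }
    { intros s h h'. apply HB. rewrite g_lS in Hle. lia. }
    split; auto. rewrite h2. unfold bm. lia.
Qed.

Lemma closure_mono u v y : la u v -> leaf_closure U (psi U D0 k D u) y -> leaf_closure U (psi U D0 k D v) y.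
Proof.
  intros h hc eps he. destruct (hc eps he) as [z [h1 h2]]. exists z; split; auto.
Qed.

Lemma part2 astar a (S : nat -> pt U -> Prop) :
  (astar < a)%nat ->
  (forall m, a_winning U D0 k D astar a (S m)) ->
  a_winning U D0 k D astar a (fun y => forall m, S m y).
Proof.
  intros Ha HS b Hb.
  set (spec := fun m (st : list (pt U * nat) -> pt U * nat) =>
    forall alpha beta : nat -> pt U * nat,
      (forall j, alpha j = st (hist U alpha beta j)) ->
      (forall j, (forall i, (i <= j)%nat -> bob_legal U D0 k D (bm a b m) alpha beta i) ->
                 alice_legal U D0 k D a alpha beta j) /\
      ((forall j, bob_legal U D0 k D (bm a b m) alpha beta j) -> alice_wins U D0 k D (S m) beta)).
  assert (Hex : forall m, exists st, spec m st).
  { intro m. apply (HS m (bm a b m)). unfold bm. apply Nat.lt_le_trans with b; [exact Hb|apply Nat.le_add_r]. }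
  set (sm := fun m => proj1_sig (constructive_indefinite_description _ (Hex m))).
  assert (Hsm : forall m, spec m (sm m)).
  { intro m. unfold sm. destruct (constructive_indefinite_description _ (Hex m)); auto. }
  set (dflt := (x, 0%nat)).
  set (sub := fun (h : list (pt U * nat)) m l =>
     hist U (fun l' => nth (2 * g m l' + 1) h dflt) (fun l' => nth (2 * g m l') h dflt) l).
  set (strat := fun h : list (pt U * nat) =>
     let t := Nat.div2 (length h) in
     sm (fst (dec (Datatypes.S t) t)) (sub h (fst (dec (Datatypes.S t) t)) (snd (dec (Datatypes.S t) t)))).
  exists strat. intros alpha beta Hcons.
  assert (Ksub : forall m l, alpha (g m l) =
      sm m (hist U (fun l' => alpha (g m l')) (fun l' => beta (g m l')) l)).
  { intros m l. rewrite Hcons. unfold strat. rewrite hist_len. rewrite Nat.div2_odd'.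
    rewrite dec_g by lia. simpl. f_equal. unfold sub. apply hist_ext.
    - intros i hi. apply hist_nth_alpha. apply g_smono; auto.
    - intros i hi. apply hist_nth_beta. apply g_mono; auto. }
  assert (L : forall j, (forall i, (i <= j)%nat -> bob_legal U D0 k D b alpha beta i) ->
                 alice_legal U D0 k D a alpha beta j).
  { intro j. induction j as [j IH] using (well_founded_induction lt_wf). intro Hbl.
    pose proof (dec_spec (Datatypes.S j) j (Nat.lt_succ_diag_r j)) as Hj.
    set (m := fst (dec (Datatypes.S j) j)) in *. set (l := snd (dec (Datatypes.S j) j)) in *.
    destruct (Hsm m _ _ (Ksub m)) as [Lm _].
    assert (AL := Lm l (sub_bob_legal a b m l alpha beta
       ltac:(intros s hs; apply Hbl; lia)
       ltac:(intros s hs; apply IH; [lia|]; intros i hi; apply Hbl; lia))).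
    unfold alice_legal in AL |- *. cbv beta in AL. rewrite Hj in AL. exact AL. }
  split; [exact L|].
  intro HBall.
  assert (HA : forall s, alice_legal U D0 k D a alpha beta s) by (intro s; apply L; auto).
  assert (Hlev : forall t, (t <= snd (beta t))%nat) by (apply (beta_level U D0 k D a b alpha beta); auto; lia).
  assert (Zm : forall m, exists z, S m z /\ forall t, leaf_closure U (psi U D0 k D (beta t)) z).
  { intro m. destruct (Hsm m _ _ (Ksub m)) as [_ Wm].
    destruct Wm as [z [hz hc]].
    { intro i. apply (sub_bob_legal a b m i); auto. }
    exists z. split; auto. intro t.
    apply closure_mono with (beta (g m t)); auto.
    apply (beta_mono U D0 k D a b alpha beta); auto. apply g_ge. }
  destruct (Zm 0%nat) as [z0 [_ hc0]].
  exists z0. split; auto. intro m.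
  destruct (Zm m) as [z [hz hc]].
  replace z0 with z; auto.
  apply (limit_unique U x delta tau D0 k D xs HT Hd Ht beta); auto.
Qed.

End Part2b.
Open Scope R_scope.
Theorem proposition2p8 :
  forall (U : UnstableLamination) (x : pt U) (delta tau : R) (x0 : pt U)
    (D0 : pt U -> Prop) (k : nat -> nat) (D : nat -> nat -> pt U -> Prop)
    (xs : nat -> nat -> pt U) (astar : nat),
    0 < delta -> 0 < tau < 1 ->
    initial_domain U x delta tau x0 D0 ->
    local_tilings U x delta tau D0 k D xs ->
    (1 <= astar)%nat ->
    (1 + tau) * delta * / (sigma1 U ^ astar) < (1 - tau) * delta / 4 ->
    (forall (a b : nat) (S : pt U -> Prop),
        (astar < a)%nat -> (astar < b)%nat ->
        ab_winning U D0 k D a b S -> dense_in U S D0) /\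
    (forall (a : nat) (S : nat -> pt U -> Prop),
        (astar < a)%nat ->
        (forall m, a_winning U D0 k D astar a (S m)) ->
        a_winning U D0 k D astar a (fun y => forall m, S m y)).
Proof.
  intros U x delta tau x0 D0 k D xs astar Hd Ht Hinit HT Ha1 Hst.
  destruct Hinit as (_&HDo&_).
  split.
  - intros a b St Ha Hb Hw.
    exact (part1 U x delta tau D0 k D xs HT Hd Ht HDo astar a b St Hst Hb Hw).
  - intros a St Ha HS.
    exact (part2 U x delta tau D0 k D xs HT Hd Ht astar a St Ha HS).
Qed.
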